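(* In the layer stripping setup (see context), let $T(\mathbf a_0)$ and $T(\mathbf b_0)$ be the $n\times n$ lower triangular Toeplitz matrices with first columns $\mathbf a_0$ and $\mathbf b_0$, and $K:=T(\mathbf a_0)T(\mathbf a_0)^*+T(\mathbf b_0)T(\mathbf b_0)^*$. Let $L\in\mathbb C^{n\times n}$ be the unit lower triangular matrix with entries $L_{ij}=a_{i-j,\,j+1}/a_{0,\,j+1}$ for $0\le j\le i\le n-1$ (and $L_{ij}=0$ for $i<j$), and $D:=\mathrm{diag}(a_{0,1}^2,a_{0,2}^2,\dots,a_{0,n}^2)$. Then $K=LDL^*$, and the vector $\boldsymbol\gamma=(\gamma_0,\dots,\gamma_{n-1})^T$ satisfies $$L\boldsymbol\gamma=\frac{1}{a_{0,0}}\mathbf b_0.$$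
   Context: For a Laurent polynomial $a$, $a^*(z):=\overline{a(1/\overline z)}$; for a matrix, $^*$ is the conjugate transpose. $\mathcal S$ is the set of pairs $(a,b)$ of Laurent polynomials with $aa^*+bb^*=1$ and $0<a^*(0)<\infty$; the NLFT of $\boldsymbol\gamma$ supported in $[p,q]$ is $\prod_{k=p}^{q}\frac{1}{\sqrt{1+|\gamma_k|^2}}\begin{pmatrix}1&\gamma_k z^k\\-\overline{\gamma_k}z^{-k}&1\end{pmatrix}=\begin{pmatrix}a&b\\-b^*&a^*\end{pmatrix}$ (ordered by increasing $k$), a bijection onto $\mathcal S$. Layer stripping setup: let $n\ge1$ and $(a,b)\in\mathcal S$ with $b$ a polynomial of degree at most $n-1$. Set $a_0^*:=a^*$, $b_0:=b$, and for $k=0,\dots,n-1$ define recursively $\gamma_k:=b_k(0)/a_k^*(0)$, $a_{k+1}^*:=(a_k^*+\overline{\gamma_k}b_k)/\sqrt{1+|\gamma_k|^2}$, $b_{k+1}:=(b_k-\gamma_k a_k^* )/(z\sqrt{1+|\gamma_k|^2})$ (well defined; $a_k^*,b_k$ are polynomials of degree at most $n-1-k$ with $a_k^*(0)>0$). Write $a_k^*(z)=\sum_{j=0}^{n-1-k}a_{j,k}z^j$, $b_k(z)=\sum_{j=0}^{n-1-k}b_{j,k}z^j$, $\mathbf a_0:=(a_{0,0},\dots,a_{n-1,0})^T$, $\mathbf b_0:=(b_{0,0},\dots,b_{n-1,0})^T$; conventions $a_{n-k,k}:=0$ for $0\le k\le n-1$ and $a_{0,n}:=1$. *)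

(* Defs.v *)
(* Complex numbers: an arbitrary numClosedFieldType C
   (e.g. the complex numbers; conjugation x^*, modulus `|x|, sqrtC). *)
From HB Require Import structures.
From mathcomp Require Import all_boot all_order all_algebra.
Set Implicit Arguments. Unset Strict Implicit. Unset Printing Implicit Defensive.
Import Order.TTheory GRing.Theory Num.Theory Num.Syntax.
Local Open Scope ring_scope.

Section LayerStripping.
Variable C : numClosedFieldType.

(* z^(N-1) * p^*(z) for a polynomial p of size <= N, where
   p^*(z) = conj(p(1/conj z)) = sum_j conj(p_j) z^{-j}. *)
Definition rev_conj (N : nat) (p : {poly C}) : {poly C} :=
  \poly_(i < N) (p`_(N.-1 - i))^*.

(* For polynomials A (playing a-star) and B (playing b), the Laurent identity
   a a^* + b b^* = 1, i.e. A A^* + B B^* = 1 (note a = star A), multiplied by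
   z^(N-1) with N = max(size A, size B). *)
Definition laurent_unit (A B : {poly C}) : Prop :=
  let N := maxn (size A) (size B) in
  A * rev_conj N A + B * rev_conj N B = 'X^(N.-1).

Definition ls_gamma (AB : {poly C} * {poly C}) : C := AB.2`_0 / AB.1`_0.

Definition ls_step (AB : {poly C} * {poly C}) : {poly C} * {poly C} :=
  let g := ls_gamma AB in
  let s := sqrtC (1 + `|g| ^+ 2) in
  (s^-1 *: (AB.1 + g^* *: AB.2),
   (s^-1 *: (AB.2 - g *: AB.1)) %/ 'X).

Fixpoint ls_layer (A B : {poly C}) (k : nat) : {poly C} * {poly C} :=
  match k with
  | 0 => (A, B)
  | k'.+1 => ls_step (ls_layer A B k')
  end.

Definition ls_gam (A B : {poly C}) (k : nat) : C := ls_gamma (ls_layer A B k).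

(* a_{j,k}, with the conventions a_{n-k,k} := 0 (k <= n-1) and a_{0,n} := 1 *)
Definition acoef (n : nat) (A B : {poly C}) (j k : nat) : C :=
  if k == n then (j == 0%N)%:R
  else if j == (n - k)%N then 0
  else (ls_layer A B k).1`_j.

Definition adjmx m p (M : 'M[C]_(m, p)) : 'M[C]_(p, m) := (map_mx (fun x => x^*) M)^T.

Definition toeplitzL n (v : 'cV[C]_n) : 'M[C]_n :=
  \matrix_(i < n, j < n) (if (j <= i)%N then v (insubd i (i - j)%N) 0 else 0).

Definition a0vec n (A : {poly C}) : 'cV[C]_n := \col_(i < n) A`_i.
Definition b0vec n (B : {poly C}) : 'cV[C]_n := \col_(i < n) B`_i.

Definition Kmx n (A B : {poly C}) : 'M[C]_n :=
  toeplitzL (a0vec n A) *m adjmx (toeplitzL (a0vec n A))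
  + toeplitzL (b0vec n B) *m adjmx (toeplitzL (b0vec n B)).

Definition Lmx n (A B : {poly C}) : 'M[C]_n :=
  \matrix_(i < n, j < n)
    (if (j <= i)%N then acoef n A B (i - j) j.+1 / acoef n A B 0 j.+1 else 0).

Definition Dmx n (A B : {poly C}) : 'M[C]_n :=
  diag_mx (\row_(j < n) (acoef n A B 0 j.+1) ^+ 2).

Definition gamvec n (A B : {poly C}) : 'cV[C]_n := \col_(i < n) ls_gam A B i.

End LayerStripping.

(* Main.v *)
Require Import Defs.
From HB Require Import structures.
From mathcomp Require Import all_boot all_order all_algebra.
From mathcomp Require Import ring zify.
Import Order.TTheory GRing.Theory Num.Theory Num.Syntax.
Local Open Scope ring_scope.
Section LS.
Variable C : numClosedFieldType.
Variables (A B : {poly C}).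
Hypothesis A0 : 0 < A`_0.

Definition Ak k := (ls_layer A B k).1.
Definition Bk k := (ls_layer A B k).2.
Definition gk k := ls_gam A B k.
Definition sk k := sqrtC (1 + `|gk k|^+2).

Lemma gkE k : gk k = (Bk k)`_0 / (Ak k)`_0. Proof. by []. Qed.

Lemma coefA k j : (Ak k.+1)`_j = (sk k)^-1 * ((Ak k)`_j + (gk k)^* * (Bk k)`_j).
Proof. by rewrite /Ak /= coefZ coefD coefZ. Qed.

Lemma coefB k j : (Bk k.+1)`_j = (sk k)^-1 * ((Bk k)`_j.+1 - gk k * (Ak k)`_j.+1).
Proof.
by rewrite /Bk /= -[X in _ %/ X]expr1 -Pdiv.IdomainMonic.drop_poly_divp
  coef_drop_poly addn1 coefZ coefB coefZ.
Qed.

Lemma sk_gt0 k : 0 < sk k.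
Proof. by rewrite sqrtC_gt0 ltr_pwDl // exprn_ge0. Qed.

Lemma sk_neq0 k : sk k != 0. Proof. by rewrite gt_eqF // sk_gt0. Qed.

Lemma sk_sq k : sk k ^+ 2 = 1 + gk k * (gk k)^*.
Proof. by rewrite sqrtCK normCK. Qed.

Lemma sk_conj k : (sk k)^* = sk k.
Proof. by rewrite geC0_conj // ltW // sk_gt0. Qed.

Lemma skV_conj k : ((sk k)^-1)^* = (sk k)^-1.
Proof. by rewrite geC0_conj // invr_ge0 ltW // sk_gt0. Qed.

Lemma A0_step k : 0 < (Ak k)`_0 ->
  (Ak k.+1)`_0 = sk k * (Ak k)`_0.
Proof.
move=> ha; have ha0 : (Ak k)`_0 != 0 by rewrite gt_eqF.
have hb : (Bk k)`_0 = gk k * (Ak k)`_0 by rewrite gkE divfK.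
rewrite coefA hb.
have hs := sk_sq k; have hs0 := sk_neq0 k.
transitivity ((sk k)^-1 * ((Ak k)`_0 * (1 + gk k * (gk k)^*))); first by ring.
by rewrite -hs; field.
Qed.

Lemma A0_pos k : 0 < (Ak k)`_0.
Proof.
elim: k => [|k IH]; first exact: A0.
by rewrite A0_step // mulr_gt0 // sk_gt0.
Qed.

Lemma A0_neq0 k : (Ak k)`_0 != 0. Proof. by rewrite gt_eqF // A0_pos. Qed.

Lemma A0_conj k : ((Ak k)`_0)^* = (Ak k)`_0.
Proof. by rewrite geC0_conj // ltW // A0_pos. Qed.

Lemma B0E k : (Bk k)`_0 = gk k * (Ak k)`_0.
Proof. by rewrite gkE divfK // A0_neq0. Qed.

Definition zb k u := if u is u'.+1 then (Bk k.+1)`_u' else 0.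

Lemma zbE k u : sk k * zb k u = (Bk k)`_u - gk k * (Ak k)`_u.
Proof.
case: u => [|u] /=; first by rewrite B0E mulr0 subrr.
by rewrite coefB mulrA mulfV ?sk_neq0 // mul1r.
Qed.

Lemma AsE k u : sk k * (Ak k.+1)`_u = (Ak k)`_u + (gk k)^* * (Bk k)`_u.
Proof. by rewrite coefA mulrA mulfV ?sk_neq0 // mul1r. Qed.

Lemma Ycore k u v :
  (Ak k)`_u * ((Ak k)`_v)^* + (Bk k)`_u * ((Bk k)`_v)^* =
  (Ak k.+1)`_u * ((Ak k.+1)`_v)^* + zb k u * (zb k v)^*.
Proof.
have hs0 := sk_neq0 k.
apply: (mulfI (mulf_neq0 hs0 hs0)).
have e1 : sk k * sk k * ((Ak k.+1)`_u * ((Ak k.+1)`_v)^* + zb k u * (zb k v)^*)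
   = (sk k * (Ak k.+1)`_u) * (sk k * (Ak k.+1)`_v)^* + (sk k * zb k u) * (sk k * zb k v)^*.
  by rewrite !rmorphM /= sk_conj; ring.
rewrite e1 AsE AsE zbE zbE -expr2 sk_sq; move: (gk k) => g.
rewrite !(rmorphD, rmorphB, rmorphM) /= conjCK; ring.
Qed.

Lemma c_step k j : (Bk k)`_j.+1 / (Ak k)`_0 =
  (Bk k.+1)`_j / (Ak k.+1)`_0 + gk k * (Ak k.+1)`_j.+1 / (Ak k.+1)`_0.
Proof.
rewrite (A0_step _ (A0_pos k)) coefB coefA.
have ha := A0_neq0 k; have hs0 := sk_neq0 k; have hs := sk_sq k.
transitivity ((Bk k)`_j.+1 * (1 + gk k * (gk k)^*) / (sk k ^+ 2 * (Ak k)`_0)); first by rewrite -hs; field; rewrite ha hs0.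
by field; rewrite ha hs0.
Qed.

Lemma c_unroll i k : (Bk k)`_i / (Ak k)`_0 =
  \sum_(t < i.+1) gk (k + t) * (Ak (k + t).+1)`_(i - t) / (Ak (k + t).+1)`_0.
Proof.
elim: i k => [|i IH] k.
  rewrite big_ord1 addn0 subnn -mulrA mulfV ?A0_neq0 // mulr1.
  by rewrite gkE.
rewrite c_step IH [RHS]big_ord_recl addn0 subn0 addrC; congr (_ + _).
by apply: eq_bigr => t _; rewrite lift0 addSnnS subSS.
Qed.
Lemma sum_only0 (F : nat -> C) N : (0 < N)%N -> (forall i, (0 < i)%N -> F i = 0) ->
  \sum_(i < N) F i = F 0%N.
Proof.
case: N => // N _ h; rewrite big_ord_recl big1 ?addr0 // => i _.
by apply: h; rewrite lift0.
Qed.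

Lemma sum_cut (F : nat -> C) m N : (m <= N)%N ->
  (forall j, (m <= j)%N -> (j < N)%N -> F j = 0) ->
  \sum_(j < N) F j = \sum_(j < m) F j.
Proof.
move=> hm h; rewrite -!(big_mkord xpredT) (big_cat_nat (leq0n m) hm) /=.
rewrite [X in _ + X]big1_seq ?addr0 // => j /andP[_].
by rewrite mem_index_iota => /andP[h1 h2]; apply: h.
Qed.

Lemma coef_rc (P : {poly C}) N m : (0 < N)%N ->
  (P * rev_conj N P)`_(N.-1 + m) = \sum_(i < N) P`_(i + m) * (P`_i)^*.
Proof.
move=> hN; rewrite coefM.
have -> : (N.-1 + m).+1 = (m + N)%N by lia.
rewrite big_split_ord /= [X in X + _]big1 ?add0r.
  apply: eq_bigr => i _; rewrite /rev_conj coef_poly /=.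
  have hi := ltn_ord i.
  have -> : (N.-1 + m - (m + i) < N)%N by lia.
  have -> : (N.-1 - (N.-1 + m - (m + i)) = i)%N by lia.
  by rewrite addnC.
move=> i _; rewrite /rev_conj coef_poly /=.
have hi := ltn_ord i.
have -> : (N.-1 + m - i < N)%N = false by lia.
by rewrite mulr0.
Qed.

Variable n : nat.
Hypotheses (n1 : (1 <= n)%N) (hB : (size B <= n)%N) (hL : laurent_unit A B).

Definition corr k m := \sum_(i < n)
  ((Ak k)`_(i + m) * ((Ak k)`_i)^* + (Bk k)`_(i + m) * ((Bk k)`_i)^*).

Definition sz k := forall j, (n - k <= j)%N -> (Ak k)`_j = 0 /\ (Bk k)`_j = 0.

Lemma corr_step k : sz k -> forall m, corr k.+1 m = corr k m.
Proof.
move=> hs m; rewrite /corr.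
under [RHS]eq_bigr => i _ do rewrite Ycore.
rewrite !big_split /=; congr (_ + _).
have [n' en] : exists n', n = n'.+1 by exists n.-1; lia.
rewrite en [LHS]big_ord_recr [RHS]big_ord_recl /= rmorph0 mulr0 add0r.
have -> : (Bk k.+1)`_n' = 0.
  by rewrite coefB; have [-> ->] := hs n'.+1 ltac:(lia); rewrite mulr0 subrr mulr0.
rewrite rmorph0 mulr0 addr0; apply: eq_bigr => i _.
by rewrite add0n.
Qed.

Lemma sz_step k : (k.+1 < n)%N -> sz k -> (forall m, corr k m = (m == 0%N)%:R) ->
  sz k.+1.
Proof.
move=> hk hs hc j hj; split; last first.
  by rewrite coefB; have [-> ->] := hs j.+1 ltac:(lia); rewrite mulr0 subrr mulr0.
case: (leqP (n - k) j) => hj2.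
  by rewrite coefA; have [-> ->] := hs j hj2; rewrite mulr0 addr0 mulr0.
have ej : j = (n - k.+1)%N by lia.
have := hc j; rewrite /corr (@sum_only0 (fun i => (Ak k)`_(i + j) * ((Ak k)`_i)^*
   + (Bk k)`_(i + j) * ((Bk k)`_i)^*)); last 2 first.
- by lia.
- move=> i hi; have [-> ->] := hs (i + j)%N ltac:(lia); by rewrite !mul0r addr0.
have -> : (j == 0%N) = false by apply/eqP; lia.
rewrite add0n B0E A0_conj rmorphM /= A0_conj => h.
rewrite coefA.
suff -> : (Ak k)`_j + (gk k)^* * (Bk k)`_j = 0 by rewrite mulr0.
apply: (mulfI (A0_neq0 k)); rewrite mulr0 -[RHS]h; ring.
Qed.

Lemma lau_coef m : \sum_(i < maxn (size A) (size B)) (A`_(i + m) * (A`_i)^*)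
  + \sum_(i < maxn (size A) (size B)) (B`_(i + m) * (B`_i)^*) = (m == 0%N)%:R.
Proof.
have hA : A != 0 by apply/eqP => e; move: A0; rewrite e coef0 ltxx.
have hN : (0 < maxn (size A) (size B))%N.
  by rewrite leq_max size_poly_gt0 hA.
move: hL; rewrite /laurent_unit /= => e.
have := congr1 (fun p : {poly C} => p`_((maxn (size A) (size B)).-1 + m)) e.
rewrite coefD !coef_rc // coefXn => ->.
by rewrite -{2}[(maxn _ _).-1]addn0 eqn_add2l.
Qed.

Lemma sizeA : (size A <= n)%N.
Proof.
have hA : A != 0 by apply/eqP => e; move: A0; rewrite e coef0 ltxx.
rewrite leqNgt; apply/negP => hlt.
have eN : maxn (size A) (size B) = size A by apply/maxn_idPl; lia.
have := lau_coef (size A).-1; rewrite eN.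
rewrite (@sum_only0 (fun i => A`_(i + (size A).-1) * (A`_i)^*)); last 2 first.
- by lia.
- move=> i hi; rewrite nth_default ?mul0r //. move: hlt hi. move: (size A) => sa. lia.
rewrite (@sum_only0 (fun i => B`_(i + (size A).-1) * (B`_i)^*)); last 2 first.
- by lia.
- move=> i hi; rewrite nth_default ?mul0r //. move: hlt hi hB. move: (size A) (size B) => sa sb. lia.
rewrite add0n [B`_(size A).-1]nth_default; last by move: hlt hB; move: (size A) (size B) => sa sb; lia.
have -> : ((size A).-1 == 0%N) = false by apply/eqP; lia.
rewrite mul0r addr0 => /eqP; rewrite mulf_eq0 => /orP[].
  by rewrite -lead_coefE lead_coef_eq0 (negPf hA).
by rewrite conjC_eq0 => /eqP e; move: A0; rewrite e ltxx.
Qed.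

Lemma inv0 : sz 0 /\ forall m, corr 0 m = (m == 0%N)%:R.
Proof.
have hsA := sizeA.
split.
  move=> j hj; rewrite /Ak /Bk /= !nth_default //; move: hsA hB hj; move: (size A) (size B) => sa sb; lia.
move=> m; rewrite -lau_coef -big_split /=.
rewrite /corr /Ak /Bk /=.
apply: (@sum_cut (fun i => A`_(i + m) * (A`_i)^* + B`_(i + m) * (B`_i)^*)).
  by rewrite geq_max hsA hB.
move=> j; rewrite geq_max => /andP[h1 h2] _.
by rewrite [A`_j]nth_default // [B`_j]nth_default // rmorph0 !mulr0 addr0.
Qed.

Lemma inv_all k : (k < n)%N -> sz k /\ forall m, corr k m = (m == 0%N)%:R.
Proof.
elim: k => [_|k IH hk]; first exact: inv0.
have [h1 h2] := IH (ltnW hk).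
have h3 := @sz_step k hk h1 h2.
by split=> // m; rewrite corr_step.
Qed.

Lemma An0 : (Ak n)`_0 = 1.
Proof.
have [n' en] : exists n', n = n'.+1 by exists n.-1; lia.
have [h1 h2] := @inv_all n' ltac:(lia).
have := h2 0%N; rewrite /corr (@sum_only0 (fun i => (Ak n')`_(i + 0) * ((Ak n')`_i)^*
   + (Bk n')`_(i + 0) * ((Bk n')`_i)^*)); last 2 first.
- by lia.
- move=> i hi; have [-> ->] := h1 i ltac:(lia); by rewrite !rmorph0 !mulr0 addr0.
rewrite eqxx add0n B0E rmorphM /= A0_conj => h.
have hp := A0_pos n.
have hsq : (Ak n)`_0 ^+ 2 = 1.
  by rewrite en (A0_step _ (A0_pos n')) exprMn sk_sq -[RHS]h; ring.
move/eqP: hsq; rewrite sqrf_eq1 => /orP[/eqP //|/eqP e].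
by move: hp; rewrite e ltr0N1.
Qed.
Lemma acoefE l i : (l < n)%N -> (l <= i)%N -> (i < n)%N ->
  acoef n A B (i - l) l.+1 = (Ak l.+1)`_(i - l).
Proof.
move=> hl hli hi; rewrite /acoef.
case: eqP => [el|nel].
  have ei : i = l by lia.
  by rewrite ei subnn eqxx el An0.
case: eqP => [e|_] //.
have [h1 _] := @inv_all l.+1 ltac:(lia).
by have [-> _] := h1 (i - l)%N ltac:(lia).
Qed.

Lemma acoef0 l : (l < n)%N -> acoef n A B 0 l.+1 = (Ak l.+1)`_0.
Proof. by move=> hl; have := @acoefE l l hl (leqnn l) hl; rewrite subnn. Qed.

Lemma gam_part : Lmx n A B *m gamvec n A B = (A`_0)^-1 *: b0vec n B.
Proof.
apply/matrixP => i j; rewrite !mxE.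
under eq_bigr => l _ do rewrite !mxE.
rewrite mulrC.
have -> : B`_i / A`_0 = (Bk 0)`_i / (Ak 0)`_0 by [].
rewrite c_unroll.
rewrite (@sum_cut (fun l => (if (l <= i)%N then acoef n A B (i - l) l.+1 / acoef n A B 0 l.+1
   else 0) * ls_gam A B l) i.+1); last 2 first.
- exact: ltn_ord.
- by move=> l hl _; rewrite leqNgt hl mul0r.
apply: eq_bigr => l _.
have hl := ltn_ord l; have hi := ltn_ord i.
rewrite (_ : (l <= i)%N = true); last by lia.
rewrite acoefE ?acoef0 //; try lia.
by rewrite add0n /gk mulrC mulrA.
Qed.

Definition Kg k p0 q0 M := \sum_(r < M.+1)
  ((Ak k)`_(r + p0) * ((Ak k)`_(r + q0))^* + (Bk k)`_(r + p0) * ((Bk k)`_(r + q0))^*).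

Lemma Kg_step k p0 q0 M : (p0 == 0%N) || (q0 == 0%N) ->
  Kg k p0 q0 M.+1 = Kg k.+1 p0 q0 M + (Ak k.+1)`_(M.+1 + p0) * ((Ak k.+1)`_(M.+1 + q0))^*.
Proof.
move=> hpq; rewrite /Kg.
under eq_bigr => r _ do rewrite Ycore.
rewrite !big_split /= [X in X + _ = _]big_ord_recr /=.
rewrite [X in _ + X = _]big_ord_recl /=.
have -> : zb k (0 + p0) * (zb k (0 + q0))^* = 0.
  by case/orP: hpq => /eqP ->; rewrite /= ?rmorph0 ?mulr0 ?mul0r.
rewrite add0r.
have -> : \sum_(i < M.+1) zb k (lift ord0 i + p0) * (zb k (lift ord0 i + q0))^* =
   \sum_(i < M.+1) (Bk k.+1)`_(i + p0) * ((Bk k.+1)`_(i + q0))^*.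
  by apply: eq_bigr => r _; rewrite lift0 !addSn.
by rewrite -!addrA; congr (_ + _); rewrite addrC.
Qed.

Lemma Kg_unroll M k p0 q0 : (p0 == 0%N) || (q0 == 0%N) ->
  Kg k p0 q0 M = \sum_(t < M.+1)
    (Ak (k + t).+1)`_(M - t + p0) * ((Ak (k + t).+1)`_(M - t + q0))^*.
Proof.
move=> hpq; elim: M k => [|M IH] k.
  rewrite /Kg !big_ord1 Ycore addn0 !add0n.
  have -> : zb k p0 * (zb k q0)^* = 0.
    by case/orP: hpq => /eqP ->; rewrite /= ?rmorph0 ?mulr0 ?mul0r.
  by rewrite addr0.
rewrite Kg_step // IH [RHS]big_ord_recl addn0 subn0 addrC; congr (_ + _).
by apply: eq_bigr => t _; rewrite lift0 /= addSnnS subSS.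
Qed.
Lemma sum_cut' N m (F : 'I_N -> C) (G : nat -> C) : (m <= N)%N ->
  (forall l : 'I_N, F l = if (l < m)%N then G l else 0) ->
  \sum_(l < N) F l = \sum_(l < m) G l.
Proof.
move=> hm h; under eq_bigr => l _ do rewrite h.
rewrite (@sum_cut (fun l => if (l < m)%N then G l else 0) m N hm); last first.
  by move=> l hl _; rewrite ltnNge hl.
by apply: eq_bigr => l _; rewrite ltn_ord.
Qed.

Lemma K_part : Kmx n A B = Lmx n A B *m Dmx n A B *m adjmx (Lmx n A B).
Proof.
apply/matrixP => i j.
rewrite /Dmx mul_mx_diag /Kmx /adjmx !mxE.
under eq_bigr => l _ do rewrite !mxE.
rewrite -big_split /=.
have hi := ltn_ord i; have hj := ltn_ord j.
set M := minn i j.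
have hM : (M < n)%N by rewrite /M; lia.
rewrite (@sum_cut' n M.+1 _ (fun l => (Ak 0)`_(i - l) * ((Ak 0)`_(j - l))^*
   + (Bk 0)`_(i - l) * ((Bk 0)`_(j - l))^*)) //; last first.
  move=> l; rewrite ?mxE; have hl := ltn_ord l.
  case: (ltnP l M.+1) => hlM.
    move: hlM; rewrite ltnS leq_min => /andP[h1 h2].
    by rewrite h1 h2 !val_insubd (leq_ltn_trans (leq_subr l i) hi)
      (leq_ltn_trans (leq_subr l j) hj).
  case: (leqP l i) => hli; case: (leqP l j) => hlj;
    rewrite ?rmorph0 ?mulr0 ?mul0r ?addr0 //.
  by move: hlM; rewrite ltnNge /M leq_min hli hlj.
rewrite (@sum_cut' n M.+1 _ (fun l => (Ak l.+1)`_(i - l) * ((Ak l.+1)`_(j - l))^*)) //;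
  last first.
  move=> l; rewrite ?mxE; have hl := ltn_ord l.
  case: (ltnP l M.+1) => hlM.
    move: hlM; rewrite ltnS leq_min => /andP[h1 h2].
    rewrite h1 h2 !acoefE ?acoef0 //.
    rewrite !(rmorphM, rmorphV) /= ?A0_conj; last by rewrite unitfE A0_neq0.
    by field; rewrite A0_neq0.
  case: (leqP l i) => hli; case: (leqP l j) => hlj;
    rewrite ?rmorph0 ?mulr0 ?mul0r ?addr0 //.
  by move: hlM; rewrite ltnNge /M leq_min hli hlj.
have hpq : ((i - M)%N == 0%N) || ((j - M)%N == 0%N).
  by rewrite /M; case: (leqP i j) => h; rewrite subnn ?orbT.
have hMi : (M <= i)%N by rewrite /M geq_minl.
have hMj : (M <= j)%N by rewrite /M geq_minr.
clearbody M.
rewrite -(big_mkord xpredT (fun l => (Ak 0)`_(i - l) * ((Ak 0)`_(j - l))^*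
   + (Bk 0)`_(i - l) * ((Bk 0)`_(j - l))^*)) big_nat_rev big_mkord /=.
transitivity (Kg 0 (i - M) (j - M) M).
  apply: eq_bigr => r _; have hr := ltn_ord r.
  have -> : (i - (0 + M.+1 - r.+1) = r + (i - M))%N by lia.
  by have -> : (j - (0 + M.+1 - r.+1) = r + (j - M))%N by lia.
rewrite Kg_unroll //; apply: eq_bigr => t _; have ht := ltn_ord t.
rewrite add0n.
have -> : (M - t + (i - M) = i - t)%N by lia.
by have -> : (M - t + (j - M) = j - t)%N by lia.
Qed.

End LS.

Theorem lemma5p3 (C : numClosedFieldType) (n : nat) (A B : {poly C}) :
  (1 <= n)%N ->
  (size B <= n)%N ->
  laurent_unit A B ->
  0 < A`_0 ->
  Kmx n A B = Lmx n A B *m Dmx n A B *m adjmx (Lmx n A B) /\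
  Lmx n A B *m gamvec n A B = (A`_0)^-1 *: b0vec n B.
Proof.
move=> n1 hB hL A0; split; [exact: K_part | exact: gam_part].
Qed.
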